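(* Let $\Gamma=(V,E)$ be a finite connected undirected graph and let $(u_{ij})$ be the generators of $C(G_{aut}^+(\Gamma))$. Let $i,j,k,l\in V$ with $d(i,k)=d(j,l)=m$. Let $q\in V$ with $d(j,q)=s$ and $d(q,l)=t$, and suppose that $u_{kl}u_{aq}=u_{aq}u_{kl}$ for all $a\in V$ with $d(a,k)=t$. Then $$u_{ij}u_{kl}=u_{ij}u_{kl}\sum_{p\in V:\ d(l,p)=m,\ d(p,q)=s}u_{ip}.$$ In particular, if $m=2$ and $G_{aut}^+(\Gamma)=G_{aut}^*(\Gamma)$, then for any common neighbor $q$ of $j$ and $l$, $$u_{ij}u_{kl}=u_{ij}u_{kl}\sum_{p\in V:\ d(l,p)=2,\ (p,q)\in E}u_{ip}.$$
   Context: $\Gamma$ is a finite simple connected undirected graph on $V=\{1,\dots,n\}$, $d$ the graph distance. $C(G_{aut}^+(\Gamma))$ is the universal unital $C^*$-algebra generated by $u_{ij}$, $1\le i,j\le n$, with relations: (R1) $u_{ij}=u_{ij}^*=u_{ij}^2$; (R2) $\sum_{l} u_{il}=1=\sum_{l} u_{li}$ for all $i$; (R3) $u_{ij}u_{kl}=u_{kl}u_{ij}=0$ whenever exactly one of $(i,k)\in E$, $(j,l)\in E$ holds. ''$G_{aut}^+(\Gamma)=G_{aut}^*(\Gamma)$'' means $u_{ij}u_{kl}=u_{kl}u_{ij}$ for all $(i,k)\in E$, $(j,l)\in E$. *)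

(* Defs.v *)
From HB Require Import structures.
From mathcomp Require Import all_boot all_order all_algebra.
Set Implicit Arguments. Unset Strict Implicit. Unset Printing Implicit Defensive.
Import GRing.Theory.
Local Open Scope ring_scope.

Definition simple_graph (T : finType) (e : rel T) : Prop :=
  symmetric e /\ irreflexive e.

Definition connected_graph (T : finType) (e : rel T) : Prop :=
  forall x y : T, connect e x y.

Fixpoint walk (T : finType) (e : rel T) (n : nat) (x y : T) : bool :=
  match n with
  | 0 => x == y
  | n'.+1 => [exists z, e x z && walk e n' z y]
  end.

(* Graph distance: least n with a walk of length n from x to y
   (for a connected graph this is < #|T|, so searching 0..#|T|-1 suffices). *)
Definition gdist (T : finType) (e : rel T) (x y : T) : nat :=
  find (fun n => walk e n x y) (iota 0 #|T|).

(* Ring with involution satisfying the C*-positivity property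
   (sum of x_i^* x_i = 0 forces all x_i = 0); every C*-algebra is one. *)
Definition cstar_like (R : nzRingType) (star : R -> R) : Prop :=
  [/\ forall x, star (star x) = x,
      forall x y, star (x + y) = star x + star y,
      forall x y, star (x * y) = star y * star x,
      star 1 = 1
    & forall s : seq R, \sum_(x <- s) star x * x = 0 -> forall x, x \in s -> x = 0].

(* u satisfies the defining relations (R1)-(R3) of C(G_aut^+(Gamma)). *)
Definition qaut_rel (T : finType) (e : rel T) (R : nzRingType) (star : R -> R)
    (u : T -> T -> R) : Prop :=
  [/\ forall i j, star (u i j) = u i j /\ u i j * u i j = u i j,
      forall i, \sum_(l : T) u i l = 1 /\ \sum_(l : T) u l i = 1
    & forall i j k l, e i k != e j l -> u i j * u k l = 0 /\ u k l * u i j = 0].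

(* G_aut^+(Gamma) = G_aut^*(Gamma) *)
Definition aut_star_rel (T : finType) (e : rel T) (R : nzRingType) (u : T -> T -> R) : Prop :=
  forall i j k l, e i k -> e j l -> u i j * u k l = u k l * u i j.

(* Main.v *)
Require Import Defs.
From HB Require Import structures.
From mathcomp Require Import all_boot all_order all_algebra.
From mathcomp Require Import zify.
Set Implicit Arguments. Unset Strict Implicit.
Import GRing.Theory.
Local Open Scope ring_scope.

Lemma walkS_r (T : finType) (e : rel T) n x y z :
  walk e n x z -> e z y -> walk e n.+1 x y.
Proof.
elim: n x => [|n IH] x /=.
  by move=> /eqP -> ezy; apply/existsP; exists y; rewrite ezy eqxx.
move=> /existsP [w /andP [exw hw]] ezy; apply/existsP; exists w.
by apply/andP; split => //; exact: IH w hw ezy.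
Qed.

Lemma walkS_inv (T : finType) (e : rel T) n x y :
  walk e n.+1 x y -> exists2 z, walk e n x z & e z y.
Proof.
elim: n x => [|n IH] x /=.
  by move=> /existsP [w /andP [exw /eqP <-]]; exists x => /=.
move=> /existsP [w /andP [exw hw]]; have [z hz ezy] := IH w hw.
by exists z => //; apply/existsP; exists w; rewrite exw.
Qed.

Lemma walk_sym (T : finType) (e : rel T) : symmetric e ->
  forall n x y, walk e n x y -> walk e n y x.
Proof.
move=> he; elim=> [|n IH] x y; first by rewrite /= eq_sym.
move=> h; have /existsP [z /andP [exz hz]] : [exists z, e x z && walk e n z y] := h.
by apply: (walkS_r (IH _ _ hz)); rewrite he.
Qed.

Lemma walk_path (T : finType) (e : rel T) p x :
  path e x p -> walk e (size p) x (last x p).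
Proof.
elim: p x => [|y p IH] x /=; first by rewrite eqxx.
move=> /andP [exy hp]; apply/existsP; exists y; apply/andP; split => //; exact: IH.
Qed.

Lemma walk_conn (T : finType) (e : rel T) : connected_graph e ->
  forall x y, exists2 n, (n < #|T|)%N & walk e n x y.
Proof.
move=> hc x y; have /connectP [p hp ->] := hc x y.
case: (shortenP hp) => p' hp' hu _.
exists (size p'); last exact: walk_path.
have := max_card (mem (x :: p')); rewrite (card_uniqP hu) /=; lia.
Qed.

Lemma gdist_walk (T : finType) (e : rel T) : connected_graph e ->
  forall x y, walk e (gdist e x y) x y.
Proof.
move=> hc x y; have [n hn hw] := walk_conn hc x y.
have hh : has (fun n => walk e n x y) (iota 0 #|T|).
  by apply/hasP; exists n => //; rewrite mem_iota.
have := nth_find 0%N hh; rewrite has_find size_iota in hh.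
by rewrite nth_iota.
Qed.

Lemma gdist_min (T : finType) (e : rel T) : connected_graph e ->
  forall n x y, walk e n x y -> (gdist e x y <= n)%N.
Proof.
move=> hc n x y hw; rewrite leqNgt; apply/negP => hlt.
have [k hk hw'] := walk_conn hc x y.
have hh : has (fun n => walk e n x y) (iota 0 #|T|).
  by apply/hasP; exists k => //; rewrite mem_iota.
move: (hh); rewrite has_find size_iota => hf.
have := before_find 0%N hlt; rewrite nth_iota; last by rewrite /gdist in hlt; lia.
by rewrite hw.
Qed.

Lemma gdistC (T : finType) (e : rel T) : symmetric e -> connected_graph e ->
  forall x y, gdist e x y = gdist e y x.
Proof.
move=> he hc x y; apply/eqP; rewrite eqn_leq.
by rewrite !gdist_min // walk_sym // gdist_walk.
Qed.

Lemma gdist0 (T : finType) (e : rel T) : connected_graph e ->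
  forall x y, gdist e x y = 0%N -> x = y.
Proof. by move=> hc x y h; have := gdist_walk hc x y; rewrite h => /eqP. Qed.

Lemma gdist_xx (T : finType) (e : rel T) : connected_graph e ->
  forall x, gdist e x x = 0%N.
Proof. by move=> hc x; apply/eqP; rewrite -leqn0 gdist_min //= eqxx. Qed.

Lemma gdist_edge (T : finType) (e : rel T) : connected_graph e ->
  forall j b l, e b l -> (gdist e j l <= (gdist e j b).+1)%N.
Proof. by move=> hc j b l hbl; apply: (gdist_min hc); apply: walkS_r (gdist_walk hc _ _) hbl. Qed.

Lemma gdist_pred (T : finType) (e : rel T) : connected_graph e ->
  forall i k n, gdist e i k = n.+1 -> exists2 a, e a k & gdist e i a = n.
Proof.
move=> hc i k n h; have := gdist_walk hc i k; rewrite h => /walkS_inv [z hz ezk].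
exists z => //; have h1 := gdist_min hc hz.
have h2 := gdist_edge hc i ezk; lia.
Qed.

Lemma gdist1 (T : finType) (e : rel T) : simple_graph e -> connected_graph e ->
  forall x y, (gdist e x y == 1%N) = e x y.
Proof.
move=> [he hi] hc x y; apply/eqP/idP => [h|exy].
  have := gdist_walk hc x y; rewrite h => hw.
  by have /existsP [z /andP [exz /eqP <-]] : [exists z, e x z && walk e 0 z y] := hw.
have h1 : (gdist e x y <= 1)%N.
  apply: (gdist_min hc); apply: (@walkS_r _ _ 0 x y x) => //=.
case: (gdist e x y =P 0%N) => [/(gdist0 hc) exy'|]; last by lia.
by move: exy; rewrite exy' hi.
Qed.
Lemma star0 (R : nzRingType) (star : R -> R) : cstar_like star -> star 0 = 0.
Proof.
case=> _ hadd _ _ _; apply: (@addrI _ (star 0)).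
by rewrite -hadd !addr0.
Qed.

Lemma qaut_tr (T : finType) (e : rel T) (R : nzRingType) (star : R -> R) u :
  qaut_rel e star u -> qaut_rel e star (fun i j => u j i).
Proof.
case=> h1 h2 h3; split=> [i j|i|i j k l hne]; first exact: h1.
  by have [a b] := h2 i; split.
by apply: h3; rewrite eq_sym.
Qed.

Lemma orth (T : finType) (e : rel T) (R : nzRingType) (star : R -> R) u :
  cstar_like star -> qaut_rel e star u ->
  forall i j l, j != l -> u i j * u i l = 0.
Proof.
move=> hs hq i j l hjl.
have [hst hadd hmul h1 hpos] := hs.
have [hp hsum _] := hq.
have key : forall l0, l0 != j -> u i l0 * u i j = 0.
  move=> l0 hl.
  have hS : \sum_(l | l != j) (u i j * u i l * u i j) = 0.
    have E : u i j = u i j + \sum_(l | l != j) (u i j * u i l * u i j).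
      rewrite -[LHS](proj2 (hp i j)) -{1}[u i j]mulr1 -(proj1 (hsum i)).
      rewrite mulr_sumr mulr_suml (bigD1 j) //=.
      by rewrite (proj2 (hp i j)) (proj2 (hp i j)).
    by apply: (@addrI _ (u i j)); rewrite addr0 -E.
  apply: (hpos [seq u i l0 * u i j | l0 <- filter (fun l => l != j) (index_enum T)]).
    rewrite big_map big_filter -[RHS]hS; apply: eq_bigr => l' _.
    rewrite hmul (proj1 (hp i j)) (proj1 (hp i l')) !mulrA.
    by rewrite -(mulrA (u i j)) (proj2 (hp i l')).
  by apply: map_f; rewrite mem_filter hl mem_index_enum.
have [hst' _ hmul' _ _] := hs.
by rewrite -(proj1 (hp i j)) -(proj1 (hp i l)) -hmul key 1?eq_sym // star0.
Qed.

Lemma dist_lt (T : finType) (e : rel T) (R : nzRingType) (star : R -> R) :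
  simple_graph e -> connected_graph e -> cstar_like star ->
  forall n u, qaut_rel e star u -> forall i j k l,
  gdist e i k = n -> (n < gdist e j l)%N -> u i j * u k l = 0.
Proof.
move=> hg hc hs; elim/ltn_ind => n IH u hq i j k l hik hjl.
case: n IH hik hjl => [|n] IH hik hjl.
  have eik := gdist0 hc hik; subst k.
  apply: (orth hs hq); apply/eqP => ejl; subst l.
  by rewrite gdist_xx in hjl.
have [a eak hia] := gdist_pred hc hik.
have [hp hsum h3] := hq.
rewrite -[u i j]mulr1 -(proj1 (hsum a)) mulr_sumr mulr_suml big1 // => b _.
case: (boolP (e b l)) => hbl; last first.
  by rewrite -mulrA (proj1 (h3 a b k l _)) ?mulr0 // eak (negbTE hbl).
have := gdist_edge hc j hbl => hjb.
case: (ltngtP (gdist e j b) n) => hjbn.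
- have := IH (gdist e j b) ltac:(lia) (fun x y => u y x) (qaut_tr hq) j i b a erefl.
  by rewrite hia => ->; rewrite ?mul0r.
- by rewrite (IH n ltac:(lia) u hq i j a b hia hjbn) mul0r.
- lia.
Qed.

Lemma dist_ne (T : finType) (e : rel T) (R : nzRingType) (star : R -> R) u :
  simple_graph e -> connected_graph e -> cstar_like star -> qaut_rel e star u ->
  forall i j k l, gdist e i k != gdist e j l -> u i j * u k l = 0.
Proof.
move=> hg hc hs hq i j k l; case: ltngtP => // h _.
  exact: (dist_lt hg hc hs hq erefl h).
exact: (dist_lt hg hc hs (qaut_tr hq) erefl h).
Qed.
Unset Implicit Arguments. Set Strict Implicit.
Theorem lemma3p6 (T : finType) (e : rel T) (R : nzRingType) (star : R -> R)
    (u : T -> T -> R) :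
  simple_graph e -> connected_graph e -> cstar_like star -> qaut_rel e star u ->
  (forall (i j k l q : T) (m s t : nat),
     gdist e i k = m -> gdist e j l = m -> gdist e j q = s -> gdist e q l = t ->
     (forall a : T, gdist e a k = t -> u k l * u a q = u a q * u k l) ->
     u i j * u k l
       = u i j * u k l * \sum_(p : T | (gdist e l p == m) && (gdist e p q == s)) u i p)
  /\
  (aut_star_rel e u ->
   forall (i j k l q : T),
     gdist e i k = 2%N -> gdist e j l = 2%N -> e j q -> e q l ->
     u i j * u k l
       = u i j * u k l * \sum_(p : T | (gdist e l p == 2%N) && e p q) u i p).
Proof.
move=> hg hc hs hq.
have D0 := dist_ne hg hc hs hq.
have dC := gdistC hg.1 hc.
have [hp hsum h3] := hq.
have P1 : forall (i j k l q : T) (m s t : nat),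
     gdist e i k = m -> gdist e j l = m -> gdist e j q = s -> gdist e q l = t ->
     (forall a : T, gdist e a k = t -> u k l * u a q = u a q * u k l) ->
     u i j * u k l
       = u i j * u k l * \sum_(p : T | (gdist e l p == m) && (gdist e p q == s)) u i p.
  move=> i j k l q m s t him hjl hjq hql hcom.
  have E : u i j * u k l = u i j * u k l * \sum_p u i p by rewrite (proj1 (hsum i)) mulr1.
  rewrite {1}E [in LHS](bigID (fun p => (gdist e l p == m) && (gdist e p q == s))) /=.
  rewrite mulrDr [X in _ + X](_ : _ = 0) ?addr0 //; rewrite mulr_sumr; apply: big1 => p hP.
  case: (boolP (gdist e l p == m)) => hlp; last first.
    by rewrite -mulrA (D0 k l i p) ?mulr0 // dC him eq_sym.
  rewrite hlp /= in hP.
  rewrite -[u i j * u k l]mulr1 -(proj2 (hsum q)) mulr_sumr mulr_suml; apply: big1 => a _.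
  case: (eqVneq (gdist e a i) (gdist e q p)) => hai; last first.
    by rewrite -mulrA (D0 a q i p) ?mulr0.
  case: (eqVneq (gdist e k a) t) => hka; last first.
    by rewrite -(mulrA (u i j)) (D0 k l a q) ?mulr0 ?mul0r // (dC l q) hql.
  rewrite -(mulrA (u i j)) hcom; last by rewrite dC.
  rewrite mulrA (D0 i j a q) ?mul0r ?mul0r // dC hai hjq dC.
  exact: hP.
split=> [//|hstar i j k l q hik hjl ejq eql].
have hjq : gdist e j q = 1%N by apply/eqP; rewrite gdist1.
have hql : gdist e q l = 1%N by apply/eqP; rewrite gdist1.
rewrite {1}(P1 i j k l q 2%N 1%N 1%N hik hjl hjq hql).
  by congr (_ * _); apply: eq_bigl => p; rewrite gdist1.
move=> a /eqP; rewrite gdist1 // => eak; apply: hstar.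
  by rewrite hg.1.
by rewrite hg.1.
Qed.
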